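(* Let $P=(T;U,V)$ be a 3M-DAP with $u = v+1$. Then $f(P) > x_u - x_v$.
   Context: A three-matrix division and assignment problem (3M-DAP) $P=(T;U,V)$ is specified by integers $t,u,v$ (numbers of columns), integers $s_t, s_u, s_v$ (numbers of rows) and rationals $x_t, x_u, x_v$ (required row sums), subject to: $t \ge 2$, $u \ge 2$, $v \ge 1$; if $v = 1$ then $v s_v \le (t-2)s_t$; $s_t > 0$, $s_u > 0$, $s_v \ge 0$; $s_u u + s_v v = s_t t$; $s_u x_u + s_v x_v = s_t x_t$; and $x_u/u < x_v/v$. A feasible solution assigns real values to the entries of an $s_t\times t$ matrix $T$, an $s_u \times u$ matrix $U$ and an $s_v \times v$ matrix $V$ so that every row of $T$, $U$, $V$ sums to $x_t$, $x_u$, $x_v$ respectively, and the multiset of entries of $T$ equals the multiset union of the entries of $U$ and $V$. $f(P)$ is the maximum, over feasible solutions, of the smallest entry of $T$. *)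

(* Defs.v *)
From HB Require Import structures.
From mathcomp Require Import all_boot all_order all_algebra.
From mathcomp Require Import classical_sets reals.
Set Implicit Arguments. Unset Strict Implicit. Unset Printing Implicit Defensive.
Import Order.TTheory GRing.Theory Num.Theory.
Local Open Scope ring_scope.
Local Open Scope classical_set_scope.

(* Parameters of a three-matrix division and assignment problem (3M-DAP):
   column numbers t u v, row numbers st su sv, rational row sums xt xu xv. *)
Definition is_3MDAP (t u v st su sv : nat) (xt xu xv : rat) : Prop :=
  (2 <= t)%N /\ (2 <= u)%N /\ (1 <= v)%N /\
  (v = 1%N -> (v * sv <= (t - 2) * st)%N) /\
  (0 < st)%N /\ (0 < su)%N /\
  (su * u + sv * v = st * t)%N /\
  su%:R * xu + sv%:R * xv = st%:R * xt /\
  xu / u%:R < xv / v%:R.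

Definition mx_entries (R : Type) (m n : nat) (A : 'M[R]_(m, n)) : seq R :=
  [seq A i j | i <- enum 'I_m, j <- enum 'I_n].

Definition feasible (R : realType) (t u v st su sv : nat) (xt xu xv : rat)
  (T : 'M[R]_(st, t)) (U : 'M[R]_(su, u)) (V : 'M[R]_(sv, v)) : Prop :=
  [/\ forall i, \sum_j T i j = ratr xt,
      forall i, \sum_j U i j = ratr xu,
      forall i, \sum_j V i j = ratr xv &
      perm_eq (mx_entries T) (mx_entries U ++ mx_entries V)].

Definition min_entry_values (R : realType) (t u v st su sv : nat)
  (xt xu xv : rat) : set R :=
  [set y | exists (T : 'M[R]_(st, t)) (U : 'M[R]_(su, u)) (V : 'M[R]_(sv, v)),
     feasible xt xu xv T U V /\ (exists i j, T i j = y) /\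
     (forall i j, y <= T i j)].

Arguments min_entry_values R t u v st su sv xt xu xv : clear implicits.

Definition f_dap (R : realType) (t u v st su sv : nat) (xt xu xv : rat) : R :=
  sup (min_entry_values R t u v st su sv xt xu xv).
Arguments f_dap R t u v st su sv xt xu xv : clear implicits.

(* Main.v *)
Require Import Defs.
From HB Require Import structures.
From mathcomp Require Import all_boot all_order all_algebra.
From mathcomp Require Import classical_sets reals.
From mathcomp Require Import zify ring lra.
Set Implicit Arguments. Unset Strict Implicit. Unset Printing Implicit Defensive.

Lemma count_sumE (T : Type) (P : pred T) (s : seq T) :
  count P s = \sum_(x <- s) (P x : nat).
Proof. by elim: s => [|x s IH]; rewrite ?big_nil ?big_cons //= IH. Qed.

Lemma allpairs_swap (T : eqType) (f : nat -> nat -> T) (s t : seq nat) :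
  perm_eq [seq f i j | i <- s, j <- t] [seq f i j | j <- t, i <- s].
Proof.
apply/permP => a; rewrite !count_flatten -!map_comp !sumnE !big_map.
under eq_bigr => i _ do rewrite /= count_sumE big_map.
under [RHS]eq_bigr => j _ do rewrite /= count_sumE big_map.
exact: exchange_big.
Qed.

Lemma mono_f (f : nat -> nat) n : (forall j, j < n -> f j <= f j.+1) ->
  forall a b, a <= b -> b <= n -> f a <= f b.
Proof.
move=> H a b ab bn; elim: b ab bn => [|b IH]; first by rewrite leqn0 => /eqP ->.
rewrite leq_eqVlt => /orP [/eqP -> //| ab] bn.
by apply: leq_trans (IH ab (ltnW bn)) (H _ bn).
Qed.

Lemma grow_f (f : nat -> nat) n sig : (forall j, j < n -> f j + sig <= f j.+1) ->
  forall a k, a + k <= n -> f a + k * sig <= f (a + k).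
Proof.
move=> H a; elim => [|k IH] akn; first by rewrite addn0 mul0n addn0.
have akn' : a + k <= n by lia.
have := IH akn'; have := H (a + k); rewrite addnS in akn * => /(_ akn); rewrite mulSn; lia.
Qed.

Lemma count_diam (P : pred nat) n m :
  (forall j1 j2, j1 < j2 -> j2 < n -> P j1 -> P j2 -> j2 - j1 <= m) ->
  count P (iota 0 n) <= m.+1.
Proof.
move=> H; rewrite -size_filter.
case E: (filter P (iota 0 n)) => [|h s] //=.
have srt : sorted ltn (h :: s) by rewrite -E; apply: (sorted_filter ltn_trans); exact: iota_ltn_sorted.
have hmin : all (ltn h) s by apply: (order_path_min ltn_trans).
have memh : h \in filter P (iota 0 n) by rewrite E mem_head.
have un : uniq (h :: s) by rewrite -E; apply: filter_uniq; exact: iota_uniq.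
suff : size (h :: s) <= size (iota h m.+1) by rewrite size_iota.
apply: uniq_leq_size => // x; rewrite inE => /orP [/eqP ->|xs].
  by rewrite mem_iota leqnn /=; lia.
have hx : h < x by move/allP: hmin => /(_ x xs).
have : x \in filter P (iota 0 n) by rewrite E inE xs orbT.
rewrite mem_filter mem_iota => /andP [Px /andP [_ xn]].
move: memh; rewrite mem_filter mem_iota => /andP [Ph _].
have := H h x hx xn Ph Px; rewrite mem_iota; lia.
Qed.


Definition meets (f : nat -> nat) lo hi j := (f j < hi) && (lo < f j.+1).

Lemma count_spacing (f : nat -> nat) n sig lo hi m :
  (forall j, j < n -> f j + sig <= f j.+1) -> hi - lo <= m * sig ->
  count (meets f lo hi) (iota 0 n) <= m.+1.
Proof.
move=> H hl; apply: count_diam => j1 j2 j12 j2n /andP [_ h1] /andP [h2 _].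
have := grow_f H (a := j1.+1) (k := j2 - j1.+1); rewrite subnKC // => /(_ (ltnW j2n)) g.
have : (j2 - j1.+1) * sig < m * sig by lia.
rewrite ltn_mul2r => /andP [_]; lia.
Qed.

Lemma count_noinside (f : nat -> nat) n lo hi :
  (forall j, j < n -> f j < f j.+1) ->
  (forall i, i < n -> ~~ ((lo < f i) && (f i.+1 < hi))) ->
  count (meets f lo hi) (iota 0 n) <= 2.
Proof.
move=> H N; apply: count_diam => j1 j2 j12 j2n /andP [_ h1] /andP [h2 _].
rewrite leqNgt; apply/negP => d2.
have mo : forall a b, a <= b -> b <= n -> f a <= f b.
  by apply: mono_f => j jn; apply: ltnW; apply: H.
have := N j1.+1 ltac:(lia); rewrite h1 /=.
have := mo j1.+2 j2 ltac:(lia) (ltnW j2n); lia.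
Qed.

Definition ov a1 a2 b1 b2 := minn a2 b2 - maxn a1 b1.

Lemma ov_tele (x1 x2 : nat) (B : nat -> nat) n :
  (forall j, j < n -> B j <= B j.+1) -> x1 <= x2 ->
  \sum_(j < n) ov x1 x2 (B j) (B j.+1) = minn x2 (B n) - maxn x1 (B 0).
Proof.
move=> H x12; elim: n H => [|n IH] H; first by rewrite big_ord0; lia.
rewrite big_ord_recr /= IH; last by move=> j jn; apply: H; lia.
have mo := mono_f H (a := 0) (b := n) (leq0n _) (leqnSn _).
have := H n (leqnn _); rewrite /ov; lia.
Qed.


Lemma flatten_nseq0 (s : seq nat) (g : nat -> nat) :
  flatten [seq nseq (g i) 0 | i <- s] = nseq (\sum_(i <- s) g i) 0.
Proof. by elim: s => [|a s IH]; rewrite ?big_nil ?big_cons //= IH nseqD. Qed.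

Lemma perm_flatten_cat (T : eqType) (F Z : nat -> seq T) (s : seq nat) :
  perm_eq (flatten [seq F i ++ Z i | i <- s])
          (flatten [seq F i | i <- s] ++ flatten [seq Z i | i <- s]).
Proof.
elim: s => [|a s IH] //=.
by rewrite perm_sym perm_catACA perm_sym perm_cat2l.
Qed.

Lemma ovC a1 a2 b1 b2 : ov a1 a2 b1 b2 = ov b1 b2 a1 a2.
Proof. by rewrite /ov minnC maxnC. Qed.

Section Layout.
Variables (p q : nat) (A B : nat -> nat) (kT kB : nat -> nat).
Hypotheses (incA : forall i, i < p -> A i < A i.+1)
           (incB : forall j, j < q -> B j < B j.+1)
           (A0 : A 0 = 0) (B0 : B 0 = 0) (AB : A p = B q).

Definition ovp i j := ov (A i) (A i.+1) (B j) (B j.+1).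
Definition cT i := count (fun j => 0 < ovp i j) (iota 0 q).
Definition cB j := count (fun i => 0 < ovp i j) (iota 0 p).
Definition LT i := [seq ovp i j | j <- iota 0 q & 0 < ovp i j] ++ nseq (kT i - cT i) 0.
Definition LB j := [seq ovp i j | i <- iota 0 p & 0 < ovp i j] ++ nseq (kB j - cB j) 0.

Lemma ovp_pos i j : i < p -> j < q ->
  (0 < ovp i j) = (B j < A i.+1) && (A i < B j.+1).
Proof.
move=> ip jq; have := incA ip; have := incB jq; rewrite /ovp /ov.
case: (ltnP (B j) (A i.+1)); case: (ltnP (A i) (B j.+1)) => /=; lia.
Qed.

Lemma cT_meets i : i < p -> cT i = count (meets B (A i) (A i.+1)) (iota 0 q).
Proof.
move=> ip; apply: eq_in_count => j; rewrite mem_iota add0n => /andP [_ jq].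
by rewrite ovp_pos.
Qed.

Lemma cB_meets j : j < q -> cB j = count (meets A (B j) (B j.+1)) (iota 0 p).
Proof.
move=> jq; apply: eq_in_count => i; rewrite mem_iota add0n => /andP [_ ip].
by rewrite ovp_pos // /meets andbC.
Qed.

Lemma size_LT i : cT i <= kT i -> size (LT i) = kT i.
Proof. by move=> h; rewrite size_cat size_nseq size_map size_filter /cT subnKC. Qed.

Lemma size_LB j : cB j <= kB j -> size (LB j) = kB j.
Proof. by move=> h; rewrite size_cat size_nseq size_map size_filter /cB subnKC. Qed.

Lemma sum_filter_pos (F : nat -> nat) (s : seq nat) :
  sumn [seq F j | j <- s & 0 < F j] = \sum_(j <- s) F j.
Proof.
elim: s => [|a s IH]; rewrite ?big_nil ?big_cons //=.
by case: ifP => /= [_|]; rewrite IH //; rewrite lt0n => /negbFE /eqP ->.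
Qed.

Lemma monoA a b : a <= b -> b <= p -> A a <= A b.
Proof. by apply: mono_f => j jp; apply: ltnW; apply: incA. Qed.
Lemma monoB a b : a <= b -> b <= q -> B a <= B b.
Proof. by apply: mono_f => j jp; apply: ltnW; apply: incB. Qed.

Lemma sum_LT i : i < p -> sumn (LT i) = A i.+1 - A i.
Proof.
move=> ip; rewrite sumn_cat sumn_nseq mul0n addn0 sum_filter_pos.
have -> : \sum_(j <- iota 0 q) ovp i j = \sum_(j < q) ovp i j by rewrite -(big_mkord xpredT (ovp i)) /index_iota subn0.
rewrite /ovp ov_tele; first last.
- by apply: ltnW; apply: incA.
- by move=> j jq; apply: ltnW; apply: incB.
have := monoA ip (leqnn p); rewrite -AB B0; lia.
Qed.

Lemma sum_LB j : j < q -> sumn (LB j) = B j.+1 - B j.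
Proof.
move=> jq; rewrite sumn_cat sumn_nseq mul0n addn0 sum_filter_pos.
have -> : \sum_(i <- iota 0 p) ovp i j = \sum_(i < p) ovp i j by rewrite -(big_mkord xpredT (ovp ^~ j)) /index_iota subn0.
under eq_bigr => i _ do rewrite /ovp ovC.
rewrite ov_tele; first last.
- by apply: ltnW; apply: incB.
- by move=> i ip; apply: ltnW; apply: incA.
have := monoB jq (leqnn q); rewrite AB A0; lia.
Qed.

Lemma layout_perm :
  (forall i, i < p -> cT i <= kT i) -> (forall j, j < q -> cB j <= kB j) ->
  \sum_(i < p) kT i = \sum_(j < q) kB j ->
  perm_eq (flatten [seq LT i | i <- iota 0 p]) (flatten [seq LB j | j <- iota 0 q]).
Proof.
move=> hT hB hsum.
apply: (perm_trans (perm_flatten_cat _ _ _)).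
apply: perm_trans; last by rewrite perm_sym; apply: perm_flatten_cat.
rewrite !flatten_nseq0.
set P := fun x : nat => 0 < x.
have eF1 : flatten [seq [seq ovp i j | j <- iota 0 q & 0 < ovp i j] | i <- iota 0 p] =
           filter P [seq ovp i j | i <- iota 0 p, j <- iota 0 q].
  rewrite filter_flatten -map_comp; congr flatten; apply: eq_map => i /=.
  by rewrite filter_map.
have eF2 : flatten [seq [seq ovp i j | i <- iota 0 p & 0 < ovp i j] | j <- iota 0 q] =
           filter P [seq ovp i j | j <- iota 0 q, i <- iota 0 p].
  rewrite filter_flatten -map_comp; congr flatten; apply: eq_map => j /=.
  by rewrite filter_map.
have sw := allpairs_swap ovp (iota 0 p) (iota 0 q).
have cnt : \sum_(i <- iota 0 p) cT i = \sum_(j <- iota 0 q) cB j.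
  move/permP: (sw) => /(_ P); rewrite !count_flatten -!map_comp !sumnE !big_map /=.
  by under eq_bigr => i _ do rewrite count_map; under [in RHS]eq_bigr => j _ do rewrite count_map.
have zs : \sum_(i <- iota 0 p) (kT i - cT i) = \sum_(j <- iota 0 q) (kB j - cB j).
  have e1 : \sum_(i <- iota 0 p) (kT i - cT i) + \sum_(i <- iota 0 p) cT i = \sum_(i <- iota 0 p) kT i.
    rewrite -big_split /=; rewrite big_seq_cond [RHS]big_seq_cond; apply: eq_bigr => i.
    rewrite mem_iota add0n andbT => /andP [_ ip]; by rewrite subnK // hT.
  have e2 : \sum_(j <- iota 0 q) (kB j - cB j) + \sum_(j <- iota 0 q) cB j = \sum_(j <- iota 0 q) kB j.
    rewrite -big_split /=; rewrite big_seq_cond [RHS]big_seq_cond; apply: eq_bigr => j.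
    rewrite mem_iota add0n andbT => /andP [_ jq]; by rewrite subnK // hB.
  have e3 : \sum_(i <- iota 0 p) kT i = \sum_(j <- iota 0 q) kB j.
    by rewrite -(big_mkord xpredT) -(big_mkord xpredT) /index_iota !subn0 in hsum.
  lia.
by rewrite eF1 eF2 zs perm_cat2r; apply: perm_filter.
Qed.

End Layout.


Lemma sumn_addn e (s : seq nat) : sumn (map (addn e) s) = size s * e + sumn s.
Proof. by elim: s => //= x s ->; rewrite mulSn; lia. Qed.

Lemma all_addn e (s : seq nat) : 0 < e -> all (fun x => 0 < x) (map (addn e) s).
Proof. by move=> he; apply/allP => x /mapP [y _ ->]; lia. Qed.

Lemma sum_iota_const (s : seq nat) c : \sum_(i <- s) c = size s * c.
Proof. by elim: s => [|a s IH]; rewrite ?big_nil ?big_cons //= IH mulSn. Qed.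

Lemma flatten_mapf (T U : Type) (f : T -> U) (G : nat -> seq T) (s : seq nat) :
  flatten [seq map f (G i) | i <- s] = map f (flatten [seq G i | i <- s]).
Proof. by elim: s => //= a s ->; rewrite map_cat. Qed.

Definition Bf s1 l1 l2 j := minn j s1 * l1 + (j - s1) * l2.

Lemma Bf_step s1 l1 l2 j : Bf s1 l1 l2 j.+1 = Bf s1 l1 l2 j + (if j < s1 then l1 else l2).
Proof.
rewrite /Bf; case: (boolP (j < s1)) => h.
- rewrite (minn_idPl h) (minn_idPl (ltnW h)).
  rewrite (_ : j.+1 - s1 = 0); last by apply/eqP; rewrite subn_eq0.
  rewrite (_ : j - s1 = 0); last by apply/eqP; rewrite subn_eq0 ltnW.
  by rewrite !mul0n !addn0 mulSn addnC.
- rewrite -leqNgt in h.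
  rewrite (minn_idPr (leq_trans h (leqnSn _))) (minn_idPr h) (subSn h) mulSn.
  lia.
Qed.

Lemma twogroup st t tau s1 l1 c1 s2 l2 c2 e D :
  0 < tau -> 0 < l1 -> 0 < l2 -> 0 < e ->
  st * tau = s1 * l1 + s2 * l2 -> st * t = s1 * c1 + s2 * c2 ->
  (t * e + tau) * st = (s1 + s2) * D -> c1 * e + l1 = D -> c2 * e + l2 = D ->
  (forall i, i < st -> count (meets (Bf s1 l1 l2) (i * tau) (i.+1 * tau)) (iota 0 (s1 + s2)) <= t) ->
  (forall j, j < s1 + s2 -> count (meets (fun i => i * tau) (Bf s1 l1 l2 j) (Bf s1 l1 l2 j.+1)) (iota 0 st)
                <= (if j < s1 then c1 else c2)) ->
  exists TT G1 G2 : nat -> seq nat,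
    [/\ forall i, i < st -> [/\ size (TT i) = t, sumn (TT i) * st = (s1 + s2) * D & all (fun x => 0 < x) (TT i)],
        forall j, j < s1 -> size (G1 j) = c1 /\ sumn (G1 j) = D,
        forall j, j < s2 -> size (G2 j) = c2 /\ sumn (G2 j) = D &
        perm_eq (flatten [seq TT i | i <- iota 0 st]) (flatten [seq G1 j | j <- iota 0 s1] ++ flatten [seq G2 j | j <- iota 0 s2])].
Proof.
move=> tau0 l10 l20 e0 hA hk hT h1 h2 cntT cntB.
set A := fun i => i * tau.
set B := Bf s1 l1 l2.
set kT := fun _ : nat => t.
set kB := fun j => if j < s1 then c1 else c2.
have incA : forall i, i < st -> A i < A i.+1 by move=> i _; rewrite /A mulSn; lia.
have incB : forall j, j < s1 + s2 -> B j < B j.+1 by move=> j _; rewrite /B Bf_step; case: ifP; lia.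
have A0 : A 0 = 0 by [].
have B0 : B 0 = 0 by rewrite /B /Bf; lia.
have AB : A st = B (s1 + s2).
  rewrite /A /B /Bf; have -> : minn (s1 + s2) s1 = s1 by lia.
  have -> : s1 + s2 - s1 = s2 by lia. exact: hA.
have hcT : forall i, i < st -> cT (s1 + s2) A B i <= kT i.
  by move=> i ip; rewrite (cT_meets incA incB A0 B0 AB ip); apply: cntT.
have hcB : forall j, j < s1 + s2 -> cB st A B j <= kB j.
  by move=> j jq; rewrite (cB_meets incA incB A0 B0 AB jq); apply: cntB.
have hsum : \sum_(i < st) kT i = \sum_(j < s1 + s2) kB j.
  rewrite big_split_ord /= /kT /kB sum_nat_const card_ord.
  under eq_bigr => j _ do rewrite ltn_ord.
  under [X in _ = _ + X]eq_bigr => j _ do rewrite (_ : s1 + j < s1 = false) ?ltnNge ?leq_addr //.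
  rewrite !sum_nat_const !card_ord; lia.
have P := layout_perm A0 B0 AB hcT hcB hsum.
exists (fun i => map (addn e) (LT (s1 + s2) A B kT i)).
exists (fun j => map (addn e) (LB st A B kB j)).
exists (fun j => map (addn e) (LB st A B kB (s1 + j))).
split.
- move=> i ip; rewrite size_map size_LT ?hcT // sumn_addn size_LT ?hcT // (sum_LT kT incA incB A0 B0 AB ip).
  split => //; last exact: all_addn.
  by rewrite /A /kT mulSn addnK.
- move=> j js; have jq : j < s1 + s2 by lia.
  rewrite size_map size_LB ?hcB // sumn_addn size_LB ?hcB // (sum_LB kB incA incB A0 B0 AB jq).
  by rewrite /B Bf_step /kB js addKn.
- move=> j js; have jq : s1 + j < s1 + s2 by lia.
  rewrite size_map size_LB ?hcB // sumn_addn size_LB ?hcB // (sum_LB kB incA incB A0 B0 AB jq).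
  by rewrite /B Bf_step /kB ltnNge leq_addr /= addKn.
- rewrite !flatten_mapf -map_cat; apply: perm_map.
  have -> : [seq LB st A B kB (s1 + j) | j <- iota 0 s2] = [seq LB st A B kB j | j <- iota s1 s2].
    by rewrite -[in iota s1 s2](addn0 s1) iotaDl -map_comp.
  by rewrite -flatten_cat -map_cat -iotaD.
Qed.


Lemma flatten_nseqD (s : seq nat) (g : nat -> nat) (x : nat) :
  flatten [seq nseq (g i) x | i <- s] = nseq (\sum_(i <- s) g i) x.
Proof. by elim: s => [|a s IH]; rewrite ?big_nil ?big_cons //= IH nseqD. Qed.

Definition Acum (R : nat -> nat) i := \sum_(0 <= l < i) R l.

Lemma Acum_S R i : Acum R i.+1 = Acum R i + R i.
Proof. by rewrite /Acum big_nat_recr. Qed.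

Lemma onegroup st t su (R n : nat -> nat) al e D W :
  0 < al -> 0 < e -> (forall i, i < st -> 0 < R i) -> (forall i, i < st -> n i <= t) ->
  Acum R st = su * al -> \sum_(0 <= i < st) (t - n i) = su * 2 ->
  (forall i, i < st -> ((t - n i) * e + R i + n i * D) * st = W) ->
  2 * e + al = D ->
  (forall i, i < st -> count (meets (fun j => j * al) (Acum R i) (Acum R i.+1)) (iota 0 su) <= t - n i) ->
  (forall j, j < su -> count (meets (Acum R) (j * al) (j.+1 * al)) (iota 0 st) <= 2) ->
  exists TT UU : nat -> seq nat,
    [/\ forall i, i < st -> [/\ size (TT i) = t, sumn (TT i) * st = W & all (fun x => 0 < x) (TT i)],
        forall j, j < su -> size (UU j) = 2 /\ sumn (UU j) = D &
        perm_eq (flatten [seq TT i | i <- iota 0 st]) (flatten [seq UU j | j <- iota 0 su] ++ nseq (\sum_(0 <= i < st) n i) D)].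
Proof.
move=> al0 e0 R0 nt hA hk hT h2 cntT cntB.
have D0 : 0 < D by lia.
set A := Acum R.
set B := fun j => j * al.
set kT := fun i => t - n i.
set kB := fun _ : nat => 2.
have incA : forall i, i < st -> A i < A i.+1 by move=> i ip; rewrite /A Acum_S; have := R0 i ip; lia.
have incB : forall j, j < su -> B j < B j.+1 by move=> j _; rewrite /B mulSn; lia.
have A0 : A 0 = 0 by rewrite /A /Acum big_geq.
have B0 : B 0 = 0 by [].
have AB : A st = B su by rewrite /A /B hA mulnC.
have hcT : forall i, i < st -> cT su A B i <= kT i.
  by move=> i ip; rewrite (cT_meets incA incB A0 B0 AB ip); apply: cntT.
have hcB : forall j, j < su -> cB st A B j <= kB j.
  by move=> j jq; rewrite (cB_meets incA incB A0 B0 AB jq); apply: cntB.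
have hsum : \sum_(i < st) kT i = \sum_(j < su) kB j.
  rewrite /kT /kB sum_nat_const card_ord -hk.
  by rewrite -(big_mkord xpredT (fun i => t - n i)).
have P := layout_perm A0 B0 AB hcT hcB hsum.
exists (fun i => map (addn e) (LT su A B kT i) ++ nseq (n i) D).
exists (fun j => map (addn e) (LB st A B kB j)).
split.
- move=> i ip; rewrite size_cat size_nseq size_map size_LT ?hcT // sumn_cat sumn_nseq sumn_addn size_LT ?hcT // (sum_LT kT incA incB A0 B0 AB ip).
  split.
  + by rewrite /kT subnK // nt.
  + by rewrite /A Acum_S addKn -(hT i ip) /kT; congr (_ * _); lia.
  + rewrite all_cat all_addn //=; apply/allP => x /nseqP [-> _] //.
- move=> j jq.
  rewrite size_map size_LB ?hcB // sumn_addn size_LB ?hcB // (sum_LB kB incA incB A0 B0 AB jq).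
  by rewrite /B /kB mulSn addnK.
- apply: perm_trans (perm_flatten_cat _ _ _) _.
  rewrite flatten_nseqD /index_iota subn0 perm_cat2r !flatten_mapf; exact: perm_map.
Qed.


Definition natsol (t v st su sv D : nat) (TT UU VV : nat -> seq nat) :=
 [/\ (0 < D)%N,
  forall i, (i < st)%N -> [/\ size (TT i) = t, (sumn (TT i) * st = (su + sv) * D)%N & all (fun x => 0 < x)%N (TT i)],
  forall j, (j < su)%N -> size (UU j) = v.+1 /\ sumn (UU j) = D,
  forall j, (j < sv)%N -> size (VV j) = v /\ sumn (VV j) = D &
  perm_eq (flatten [seq TT i | i <- iota 0 st])
          (flatten [seq UU j | j <- iota 0 su] ++ flatten [seq VV j | j <- iota 0 sv])].



Lemma caseA_arith t v st su sv M :
  2 <= t -> 2 <= v -> 0 < st -> 0 < su -> su * v.+1 + sv * v = st * t ->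
  M = t.+1 * v.+1 ->
  let K := su + sv in let D := st * M in
  let tau := K * M - t in let al := D - v.+1 in let be := D - v in
  0 < tau /\ 0 < al /\ 0 < be /\ st * tau = su * al + sv * be /\
      (t * 1 + tau) * st = K * D /\
      tau <= (t - 1) * al /\ al <= v * tau.
Proof.
move=> t2 v2 st0 su0 hN hM K D tau al be.
have K1 : 0 < K by rewrite /K; lia.
have a1 : 3 * su <= su * v.+1 by rewrite mulnC; apply: leq_mul.
have a2 : 2 * sv <= sv * v by rewrite mulnC; apply: leq_mul.
have a3 : st * t <= 2 * ((t - 1) * st).
  rewrite mulnA mulnC; apply: leq_mul => //; lia.
have h1 : K < (t - 1) * st by rewrite /K; lia.
have a4 : su * v.+1 + sv * v <= (su + sv) * v.+1 by rewrite mulnDl leq_add2l; apply: leq_mul.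
have a5 : 2 * st <= st * t by rewrite mulnC; apply: leq_mul.
have a6 : (su + sv) * v.+1 + K <= 2 * (v * K).
  rewrite /K -mulnSr mulnA mulnC; apply: leq_mul => //; lia.
have h2 : st < v * K by lia.
have M1 : t.+1 * v.+1 <= M by rewrite hM.
have M2 : t < M by apply: leq_trans M1; rewrite mulnS; lia.
have KM : M <= K * M by apply: leq_pmull.
have DM : M <= D by rewrite /D; apply: leq_pmull.
have M3 : v.+1 < M by apply: leq_trans M1; rewrite mulSn; lia.
have eA : st * (K * M) = su * D + sv * D.
  by rewrite /D /K mulnDl mulnDr [st * (su * M)]mulnCA [st * (sv * M)]mulnCA.
have b1 : (K + 1) * M <= (t - 1) * D.
  rewrite /D mulnA; apply: leq_mul => //; by rewrite addn1.
have b2 : (t - 1) * v.+1 <= M by apply: leq_trans M1; apply: leq_mul; lia.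
have b3 : (st + 1) * M <= v * (K * M).
  rewrite mulnA; apply: leq_mul => //; by rewrite addn1.
have b4 : v * t <= M by apply: leq_trans M1; rewrite mulnC; apply: leq_mul; lia.
split; [|split; [|split; [|split; [|split; [|split]]]]].
- rewrite /tau; lia.
- rewrite /al; lia.
- rewrite /be; lia.
- rewrite /tau /al /be !mulnBr eA. clear -hN a4 KM M2 DM M3 eA. nia.
- rewrite /tau /D. have -> : t * 1 + (K * M - t) = K * M by lia.
  by rewrite -mulnA [M * st]mulnC.
- rewrite /tau /al mulnBr. move: b1 b2; rewrite mulnDl mul1n. lia.
- rewrite /tau /al mulnBr. move: b3 b4; rewrite mulnDl mul1n /D. lia.
Qed.

Lemma caseA_V t v st su sv M :
  2 <= t -> 2 <= v -> 0 < st -> 0 < su -> 0 < sv -> su * v.+1 + sv * v = st * t ->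
  (3 <= v) || (3 <= t) -> M = t.+1 * v.+1 ->
  st * M - v <= (v - 1) * ((su + sv) * M - t).
Proof.
move=> t2 v2 st0 su0 sv0 hN h3 hM.
set K := su + sv; set D := st * M.
have e1 : st * t + 1 <= K * v.+1 by rewrite /K mulnDl -hN; lia.
have h : st + 1 <= (v - 1) * K.
  case/orP: h3 => h3.
  - have : 2 * st <= st * t by rewrite mulnC; apply: leq_mul.
    have : K * v.+1 <= 2 * ((v - 1) * K).
      rewrite mulnA mulnC; apply: leq_mul => //; lia.
    lia.
  - have : 3 * st <= st * t by rewrite mulnC; apply: leq_mul.
    have : K * v.+1 <= 3 * ((v - 1) * K).
      rewrite mulnA mulnC; apply: leq_mul => //; lia.
    lia.
have M1 : t.+1 * v.+1 <= M by rewrite hM.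
have b3 : (st + 1) * M <= (v - 1) * (K * M) by rewrite mulnA; apply: leq_mul.
have b4 : (v - 1) * t <= M by apply: leq_trans M1; rewrite mulnC; apply: leq_mul; lia.
rewrite mulnBr; move: b3 b4; rewrite mulnDl mul1n /D; lia.
Qed.


Lemma caseA t v st su sv :
  2 <= t -> 2 <= v -> 0 < st -> 0 < su -> su * v.+1 + sv * v = st * t ->
  (sv == 0) || (3 <= v) || (3 <= t) ->
  exists D TT UU VV, natsol t v st su sv D TT UU VV.
Proof.
move=> t2 v2 st0 su0 hN hc.
set M := t.+1 * v.+1.
have [tau0 [al0 [be0 [hA [hT [hTa hUa]]]]]] := caseA_arith t2 v2 st0 su0 hN (erefl M).
set K := su + sv in hT hA *.
set D := st * M in hT hA al0 be0 hTa hUa *.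
set tau := K * M - t in tau0 hA hT hTa hUa *.
set al := D - v.+1 in al0 hA hTa hUa *.
set be := D - v in be0 hA *.
have hV : 0 < sv -> be <= (v - 1) * tau.
  move=> sv0; apply: caseA_V => //; move: hc; rewrite gtn_eqF //.
have h1 : v.+1 * 1 + al = D by rewrite /al; lia.
have h2 : v * 1 + be = D by rewrite /be; lia.
have hk : st * t = su * v.+1 + sv * v by rewrite hN.
have bea : al <= be by rewrite /al /be; lia.
have cntT : forall i, i < st ->
    count (meets (Bf su al be) (i * tau) (i.+1 * tau)) (iota 0 (su + sv)) <= t.
  move=> i ip; apply: leq_trans (count_spacing (m := t - 1) (sig := al) _ _) _.
  - by move=> j _; rewrite Bf_step; case: ifP => _; lia.
  - by rewrite mulSn addnK.
  - lia.
have cntB : forall j, j < su + sv ->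
    count (meets (fun i => i * tau) (Bf su al be j) (Bf su al be j.+1)) (iota 0 st)
      <= (if j < su then v.+1 else v).
  move=> j jq; case: ifP => js.
  + apply: leq_trans (count_spacing (m := v) (sig := tau) _ _) _ => //.
    * by move=> i _; rewrite mulSn; lia.
    * by rewrite Bf_step js addKn.
  + have sv0 : 0 < sv by lia.
    apply: leq_trans (count_spacing (m := v - 1) (sig := tau) _ _) _ => //.
    * by move=> i _; rewrite mulSn; lia.
    * by rewrite Bf_step js addKn hV.
    * lia.
have [TT [G1 [G2 [PT P1 P2 PP]]]] := twogroup tau0 al0 be0 (ltn0Sn 0) hA hk hT h1 h2 cntT cntB.
exists D, TT, G1, G2; split => //; rewrite /D muln_gt0 st0 /M //.
Qed.


Lemma Bf_lo s1 l1 l2 j : j <= s1 -> Bf s1 l1 l2 j = j * l1.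
Proof.
move=> h; rewrite /Bf (minn_idPl h) (_ : j - s1 = 0) ?mul0n ?addn0 //.
by apply/eqP; rewrite subn_eq0.
Qed.

Lemma align m be tau j i : 0 < m -> 0 < tau -> m * be = m.+1 * tau ->
  ~~ ((j * be < i * tau) && (i.+1 * tau < j.+1 * be)).
Proof.
move=> m0 t0 h; apply/negP => /andP [h1 h2].
have a1 : j * m.+1 * tau < m * i * tau.
  have : m * (j * be) < m * (i * tau) by rewrite ltn_pmul2l.
  by rewrite mulnCA h !mulnA.
have a2 : m * i.+1 * tau < j.+1 * m.+1 * tau.
  have : m * (i.+1 * tau) < m * (j.+1 * be) by rewrite ltn_pmul2l.
  by rewrite [X in _ < X]mulnCA h !mulnA.
rewrite ltn_pmul2r // in a1; rewrite ltn_pmul2r // in a2.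
move: a1 a2; rewrite !mulnS !mulSn; lia.
Qed.

Lemma caseB st su sv :
  0 < st -> 0 < su -> 0 < sv -> su * 3 + sv * 2 = st * 2 ->
  exists D TT UU VV, natsol 2 2 st su sv D TT UU VV.
Proof.
move=> st0 su0 sv0 hN.
set K := su + sv; have KE : K = su + sv by []; clearbody K.
set Dd := st - K; have DdE : Dd = st - K by []; clearbody Dd.
have Dd0 : 0 < Dd by rewrite DdE KE; lia.
set m := (K - 1) %/ Dd.
have m1 : m * Dd <= K - 1 by apply: leq_divM.
have m2 : K - 1 < m.+1 * Dd by apply: ltn_ceil.
have m0 : 0 < m by rewrite /m divn_gt0 // DdE KE; lia.
clearbody m.
have mst : m * st = m * Dd + m * K by rewrite -mulnDr DdE KE; congr (_ * _); lia.
set e := m.+1 * K - m * st.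
have ee : e = K - m * Dd by rewrite /e mst mulSn; lia.
clearbody e.
have e0 : 0 < e by rewrite ee; lia.
have eD : e <= 2 * Dd by rewrite ee; move: m2; rewrite mulSn; lia.
have eK : e + Dd <= K.
  rewrite ee; have : Dd <= m * Dd by rewrite -{1}(mul1n Dd) leq_mul2r m0 orbT.
  lia.
have e3 : 3 * e <= 2 * st by rewrite DdE KE in eD *; lia.
set D := 2 * st; have DE : D = 2 * st by []; clearbody D.
set tau := 2 * K - 2 * e; have tauE : tau = 2 * K - 2 * e by []; clearbody tau.
set al := 2 * st - 3 * e; have alE : al = 2 * st - 3 * e by []; clearbody al.
set be := 2 * st - 2 * e; have beE : be = 2 * st - 2 * e by []; clearbody be.
have tau0 : 0 < tau by rewrite tauE; lia.
have al0 : 0 < al by rewrite alE; lia.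
have be0 : 0 < be by rewrite beE; lia.
have hA : st * tau = sv * be + su * al.
  rewrite tauE alE beE !mulnBr.
  have E : st * (2 * e) = sv * (2 * e) + su * (3 * e).
    by rewrite !mulnA -mulnDl addnC hN.
  have X1 : st * (2 * K) = sv * (2 * st) + su * (2 * st).
    rewrite KE; lia.
  have Y1 : sv * (2 * e) <= sv * (2 * st) by apply: leq_mul; lia.
  have Y2 : su * (3 * e) <= su * (2 * st) by apply: leq_mul.
  have Y3 : st * (2 * e) <= st * (2 * K) by apply: leq_mul; lia.
  clear -E X1 Y1 Y2 Y3. lia.
have hk : st * 2 = sv * 2 + su * 3 by rewrite -hN addnC.
have hT : (2 * e + tau) * st = (sv + su) * D.
  rewrite tauE DE (_ : 2 * e + (2 * K - 2 * e) = 2 * K); last by lia.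
  rewrite KE addnC; lia.
have h1 : 2 * e + be = D by rewrite beE DE; lia.
have h2 : 3 * e + al = D by rewrite alE DE; lia.
have hal : m * be = m.+1 * tau.
  rewrite beE tauE !mulnBr.
  have F1 : m * (2 * st) = 2 * (m * Dd) + 2 * (m * K) by rewrite mulnCA mst; lia.
  have F2 : m.+1 * (2 * K) = 2 * (m * K) + 2 * K by rewrite mulSn; lia.
  have F3 : m.+1 * (2 * e) = m * (2 * e) + 2 * e by rewrite mulSn; lia.
  have F4 : m * (2 * e) <= m * (2 * st) by apply: leq_mul; lia.
  have F5 : m.+1 * (2 * e) <= m.+1 * (2 * K) by apply: leq_mul; lia.
  clear -F1 F2 F3 F4 F5 ee m1. move: F1 F2 F3 F4 F5; rewrite ee. nia.
have cntT : forall i, i < st ->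
    count (meets (Bf sv be al) (i * tau) (i.+1 * tau)) (iota 0 (sv + su)) <= 2.
  move=> i ip; apply: (count_spacing (m := 1) (sig := al)).
  - by move=> j _; rewrite Bf_step; case: ifP => _; rewrite ?beE ?alE; lia.
  - rewrite mulSn addnK mul1n tauE alE; rewrite DdE KE in eD; lia.
have cntB : forall j, j < sv + su ->
    count (meets (fun i => i * tau) (Bf sv be al j) (Bf sv be al j.+1)) (iota 0 st)
      <= (if j < sv then 2 else 3).
  move=> j jq; case: ifP => js.
  + apply: count_noinside => [i _|i ip]; first by rewrite mulSn; lia.
    rewrite (@Bf_lo sv be al j (ltnW js)) (@Bf_lo sv be al j.+1 js) /=; exact: (@align m be tau j i m0 tau0 hal).
  + apply: leq_trans (count_spacing (m := 2) (sig := tau) _ _) _ => //.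
    * by move=> i _; rewrite mulSn; lia.
    * rewrite Bf_step js addKn tauE alE.
      have : 2 * st <= 3 * K by rewrite KE; lia.
      rewrite DdE in eD; lia.
have [TT [G1 [G2 [PT P1 P2 PP]]]] := twogroup tau0 be0 al0 e0 hA hk hT h1 h2 cntT cntB.
exists D, TT, G2, G1; split => //.
- by rewrite DE; lia.
- by move=> i ip; have [? ? ?] := PT i ip; split => //; rewrite addnC.
- by rewrite perm_sym perm_catC perm_sym.
Qed.


Lemma sum_subn_const (s : seq nat) a (f : nat -> nat) :
  (forall i, i \in s -> f i <= a) ->
  \sum_(i <- s) (a - f i) = size s * a - \sum_(i <- s) f i.
Proof.
elim: s => [|x s IH] H; rewrite ?big_nil ?big_cons //=.
rewrite IH; last by move=> i iS; apply: H; rewrite inE iS orbT.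
have hx := H x (mem_head _ _).
have : \sum_(i <- s) f i <= size s * a.
  rewrite -sum_iota_const big_seq_cond [X in _ <= X]big_seq_cond; apply: leq_sum => i.
  by rewrite andbT => iS; apply: H; rewrite inE iS orbT.
rewrite mulSn; lia.
Qed.

Lemma v1_assemble t st su sv (n : nat -> nat) D e tau al be :
  0 < st -> 0 < e -> 0 < al -> 2 * e + al = D -> be = D - e ->
  (forall i, i < st -> n i < t) ->
  \sum_(0 <= i < st) n i = sv ->
  st * t = su * 2 + sv ->
  (t * e + tau) * st = (su + sv) * D ->
  st * tau = sv * be + su * al ->
  (forall i, i < st -> n i * be < tau) ->
  (forall i, i < st -> tau - n i * be <= (t - n i - 1) * al) ->
  (forall i, i < st -> (al <= tau - n i * be) \/
       exists g, Acum (fun l => tau - n l * be) i <= g * al <= Acum (fun l => tau - n l * be) i.+1) ->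
  exists TT UU VV, natsol t 1 st su sv D TT UU VV.
Proof.
move=> st0 e0 al0 hD hbe nt hn hk hT hA hR hRT hRB.
set R := fun l => tau - n l * be.
have hn' : \sum_(i <- iota 0 st) n i = sv by rewrite -hn /index_iota subn0.
have R0 : forall i, i < st -> 0 < R i by move=> i ip; rewrite /R; have := hR i ip; lia.
have nt' : forall i, i < st -> n i <= t by move=> i ip; apply: ltnW; apply: nt.
have hAc : Acum R st = su * al.
  rewrite /Acum /R /index_iota subn0 sum_subn_const; last first.
    by move=> i; rewrite mem_iota add0n => /andP [_ ip]; apply: ltnW; apply: hR.
  rewrite size_iota -big_distrl /= hn'; lia.
have hk2 : \sum_(0 <= i < st) (t - n i) = su * 2.
  rewrite /index_iota subn0 sum_subn_const; last first.
    by move=> i; rewrite mem_iota add0n => /andP [_ ip]; apply: nt'.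
  rewrite size_iota hn'; lia.
have hT' : forall i, i < st -> ((t - n i) * e + R i + n i * D) * st = (su + sv) * D.
  move=> i ip; rewrite -hT; congr (_ * _); rewrite /R hbe.
  have h1 := hR i ip; have h2 := nt' i ip; rewrite hbe in h1.
  have h3 : n i * e <= n i * D by apply: leq_mul; lia.
  have h4 : n i * e <= t * e by apply: leq_mul; lia.
  move: h1; rewrite !mulnBr !mulnBl; lia.
have cntT : forall i, i < st ->
    count (meets (fun j => j * al) (Acum R i) (Acum R i.+1)) (iota 0 su) <= t - n i.
  move=> i ip; apply: leq_trans (count_spacing (m := t - n i - 1) (sig := al) _ _) _.
  - by move=> j _; rewrite mulSn addnC.
  - by rewrite Acum_S addKn; apply: hRT.
  - have := nt i ip; lia.
have cntB : forall j, j < su -> count (meets (Acum R) (j * al) (j.+1 * al)) (iota 0 st) <= 2.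
  move=> j js; apply: count_noinside => [i ip|i ip]; first by rewrite Acum_S; have := R0 i ip; lia.
  apply/negP => /andP [h1 h2].
  case: (hRB i ip) => [h | [g /andP [g1 g2]]].
  - move: h2; rewrite Acum_S mulSn; rewrite /R in h1 *; lia.
  - have a1 : j * al < g * al by apply: leq_trans h1 g1.
    have a2 : g * al < j.+1 * al by apply: leq_ltn_trans g2 h2.
    rewrite ltn_pmul2r // in a1; rewrite ltn_pmul2r // in a2; lia.
have [TT [UU [PT PU PP]]] := onegroup al0 e0 R0 nt' hAc hk2 hT' hD cntT cntB.
exists TT, UU, (fun _ => [:: D]); split => //.
- lia.
- by move=> j _; rewrite /= addn0.
- have -> : flatten [seq [:: D] | _ <- iota 0 sv] = nseq sv D.
    by rewrite -{2}(size_iota 0 sv); elim: (iota 0 sv) => //= x s ->.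
  by rewrite -hn.
Qed.


Lemma sum_ind r n : r <= n -> \sum_(0 <= i < n) ((i < r) : nat) = r.
Proof.
move=> rn; rewrite (@big_cat_nat _ _ _ r) //=.
rewrite big_nat_cond (eq_bigr (fun _ => 1)); last first.
  by move=> i; rewrite andbT => /andP [_ ->].
rewrite -big_nat_cond sum_nat_const_nat subn0 muln1.
rewrite big_nat_cond big1 ?addn0 // => i /andP [/andP [ri _] _].
by rewrite ltnNge ri.
Qed.

Lemma sum_n st sv : 0 < st ->
  \sum_(0 <= i < st) (sv %/ st + (i < sv %% st)) = sv.
Proof.
move=> st0; rewrite big_split /= sum_nat_const_nat subn0 sum_ind; last by apply: ltnW; apply: ltn_pmod.
by rewrite mulnC -divn_eq.
Qed.

Lemma grid_pt k' i RS al : k'.+1 * RS = k' * al ->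
  exists g, i * RS <= g * al <= i.+1 * RS.
Proof.
move=> h; set k := k'.+1.
have k0 : 0 < k by [].
exists ((i %/ k) * k' + i %% k).
have bk : i %% k < k by apply: ltn_pmod.
have di := divn_eq i k.
set a := i %/ k in di *; set b := i %% k in di bk *.
apply/andP; split.
- rewrite -(leq_pmul2l k0) mulnCA h [k * (_ * al)]mulnA [i * _]mulnA.
  apply: leq_mul => //; rewrite di /k; lia.
- rewrite -(leq_pmul2l k0) [X in _ <= X]mulnCA h [k * (_ * al)]mulnA [i.+1 * _]mulnA.
  apply: leq_mul => //; rewrite di /k; rewrite /k in bk; lia.
Qed.

Lemma Acum_const (R : nat -> nat) c i : (forall l, l < i -> R l = c) -> Acum R i = i * c.
Proof.
elim: i => [|i IH] H; first by rewrite /Acum big_geq.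
rewrite Acum_S IH ?H // ?mulSn; [lia| move=> l li; apply: H; lia].
Qed.

Lemma caseD t st su sv :
  3 <= t -> 0 < st -> st * t = su * 2 + sv ->
  sv %/ st + 3 = t -> 0 < sv %% st ->
  exists TT UU VV, natsol t 1 st su sv (4 * st) TT UU VV.
Proof.
move=> t3 st0 hk hq r0.
have hn := sum_n sv st0.
set q := sv %/ st in hq hn; set r := sv %% st in r0 hn.
have hsv : sv = q * st + r by rewrite /q /r -divn_eq.
have rst : r < st by apply: ltn_pmod.
clearbody q r.
set w := st - r; have wE : st = w + r by rewrite /w; lia.
have w0 : 0 < w by rewrite /w; lia.
clearbody w.
set k := (2 * st - 1) %/ w.
have k1 : k * w <= 2 * st - 1 by apply: leq_divM.
have k2 : 2 * st - 1 < k.+1 * w by apply: ltn_ceil.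
clearbody k.
have kge : 2 <= k.
  case: (leqP 2 k) => // kl.
  have : k.+1 * w <= 2 * w by apply: leq_mul.
  lia.
set z := k * w; have zE : z = k * w by []; clearbody z.
have z1 : z + 1 <= 2 * st by lia.
have z2 : 2 * st <= z + w by move: k2; rewrite mulSn; lia.
have z3 : 2 * w <= z by rewrite zE; apply: leq_mul.
set e := 2 * st - z.
set al := 2 * z.
set be := 2 * st + z.
set RS := 2 * z - 2 * w.
set tau := q.+1 * be + RS.
set n := fun i => q + (i < r).
have e0 : 0 < e by rewrite /e; lia.
have al0 : 0 < al by rewrite /al; lia.
have hD : 2 * e + al = 4 * st by rewrite /e /al; lia.
have hbe : be = 4 * st - e by rewrite /be /e; lia.
have nt : forall i, i < st -> n i < t by move=> i _; rewrite /n; case: (i < r) => /=; lia.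
have G : t * e + tau = 4 * (su + sv).
  have eE : e + z = 2 * st by rewrite /e; lia.
  have F1 : t * e + t * z = t * (2 * st) by rewrite -eE mulnDr.
  have F2 : RS + 2 * w = 2 * z by rewrite /RS; lia.
  have F4 : st * t = su * 2 + sv := hk.
  rewrite -hq in F1 F4 *; rewrite /tau /be.
  clear -F1 F2 F4 hsv wE. lia.
have hT : (t * e + tau) * st = (su + sv) * (4 * st) by rewrite G; ring.
have hA : st * tau = sv * be + su * al.
  have P1 : st * RS + 2 * (st * w) = 2 * (st * z).
    rewrite [2 * (st * w)]mulnCA [2 * (st * z)]mulnCA -mulnDr; congr (_ * _); rewrite /RS; lia.
  have P2 : su * 2 * z + r * z = 3 * st * z.
    rewrite -mulnDl; congr (_ * _); rewrite -hq in hk; lia.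
  have P5 : st * st = st * w + st * r by rewrite -mulnDr -wE.
  rewrite /tau /be /al hsv.
  clear -P1 P2 P5. lia.
have tq1 : forall i, i < r -> tau - n i * be = RS by move=> i ir; rewrite /n ir /tau /=; lia.
have tq0 : forall i, r <= i -> tau - n i * be = be + RS.
  by move=> i ir; rewrite /n ltnNge ir /tau /=; lia.
have hR : forall i, i < st -> n i * be < tau.
  move=> i _; rewrite /tau /n; case: (i < r); rewrite ?addn1 ?addn0 ?mulSn /RS; lia.
have hRT : forall i, i < st -> tau - n i * be <= (t - n i - 1) * al.
  move=> i _; case: (ltnP i r) => ir.
  - rewrite tq1 // /n ir /= -hq (_ : q + 3 - (q + 1) - 1 = 1); last by lia.
    rewrite /RS /al; lia.
  - rewrite tq0 // /n ltnNge ir /= -hq (_ : q + 3 - (q + 0) - 1 = 2); last by lia.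
    rewrite /be /RS /al; lia.
have hRB : forall i, i < st -> (al <= tau - n i * be) \/
    exists g, Acum (fun l => tau - n l * be) i <= g * al <= Acum (fun l => tau - n l * be) i.+1.
  move=> i _; case: (ltnP i r) => ir.
  - right.
    rewrite (@Acum_const _ RS i); last by move=> l li; apply: tq1; lia.
    rewrite (@Acum_const _ RS i.+1); last by move=> l li; apply: tq1; lia.
    have [k' kE] : exists k', k = k'.+1 by exists k.-1; lia.
    apply: (@grid_pt k').
    rewrite /RS /al -kE mulnBr.
    have : k * (2 * w) = 2 * z by rewrite zE; ring.
    have : k' * (2 * z) + 2 * z = k * (2 * z) by rewrite kE mulSn addnC.
    lia.
  - left; rewrite tq0 // /al /be; lia.
exact: (v1_assemble st0 e0 al0 hD hbe nt hn hk hT hA hR hRT hRB).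
Qed.

Lemma caseC t st su sv :
  2 <= t -> 0 < st -> st * t = su * 2 + sv -> sv <= (t - 2) * st ->
  (sv %% st == 0) || (sv %/ st + 4 <= t) ->
  exists TT UU VV, natsol t 1 st su sv (4 * (st * t)) TT UU VV.
Proof.
move=> t2 st0 hk hv hc.
have hn := sum_n sv st0.
set q := sv %/ st in hc hn; set r := sv %% st in hc hn.
have hsv : sv = q * st + r by rewrite /q /r -divn_eq.
have rst : r < st by apply: ltn_pmod.
clearbody q r.
have [t' tE] : exists t', t = t' + 2 by exists (t - 2); lia.
subst t; rewrite addnK in hv.
set P := st * (t' + 2); have PE : P = st * (t' + 2) by []; clearbody P.
have Pt : t' + 2 <= P by rewrite PE leq_pmull.
set K := su + sv.
have hq2 : q <= t'.
  have : q * st <= t' * st by lia.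
  rewrite leq_mul2r => /orP [|]; lia.
have hq3 : 0 < r -> q + 1 <= t'.
  move=> r0; have : q * st < t' * st by lia.
  rewrite ltn_mul2r => /andP [_]; lia.
set S := t' * st - sv; have SE : sv + S = t' * st by rewrite /S; lia.
clearbody S.
have T1 : 2 * K = P + sv by rewrite /K; lia.
have T2 : (t' + 2) * sv = q * P + (t' + 2) * r by rewrite hsv PE; ring.
have T3 : (t' + 2) * sv + (t' + 2) * S = t' * P by rewrite -mulnDr SE PE; ring.
have T4 : (t' + 2) * (2 * K) = (t' + 2) * P + (t' + 2) * sv by rewrite T1 mulnDr.
have T5 : S = 0 \/ t' + 2 <= (t' + 2) * S.
  case: S T3 SE => [|S']; [by left | right; rewrite mulnS; lia].
have T6 : q * P <= t' * P by apply: leq_mul.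
have T7 : 0 < r -> q * P + P <= t' * P by move=> r0; rewrite addnC -mulSn; apply: leq_mul => //; have := hq3 r0; lia.
have T8 : S = 0 -> q = t' /\ r = 0.
  move=> S0; rewrite S0 addn0 hsv in SE.
  case: (ltnP q t') => qt.
  - have : q.+1 * st <= t' * st by apply: leq_mul.
    rewrite mulSn; lia.
  - have qe : q = t' by lia.
    by split => //; move: SE; rewrite qe; lia.
set e := 1.
set al := 4 * P - 2.
set be := 4 * P - 1.
set tau := 2 * ((t' + 2) * (2 * K)) - (t' + 2).
have P2 : 2 <= P by lia.
have tauE : tau + (t' + 2) = 2 * ((t' + 2) * P) + 2 * (q * P) + 2 * ((t' + 2) * r).
  rewrite /tau subnK; first lia.
  rewrite T4 T2; have : t' + 2 <= (t' + 2) * P by apply: leq_pmulr; lia.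
  lia.
have Tr : 0 < r -> t' + 2 <= (t' + 2) * r by move=> r0; apply: leq_pmulr.
have T6' : q < t' -> q * P + P <= t' * P by move=> qt; rewrite addnC -mulSn; apply: leq_mul.
have C12 : forall m, (m = q \/ (m = q + 1 /\ 0 < r)) ->
    m * be + al <= tau /\ tau <= m * be + (t' + 1 - m) * al.
  move=> m hm.
  have mt : m <= t' + 1 by case: hm => [->|[-> r0]]; [lia | have := hq3 r0; lia].
  have M1 : (t' + 1 - m) * al + m * al = (t' + 1) * al by rewrite -mulnDl subnK.
  have beal : be = al + 1 by rewrite /be /al; lia.
  have al2 : al + 2 = 4 * P by rewrite /al; lia.
  have M2 : m * be = m * al + m by rewrite beal mulnDr muln1.
  have M3 : (t' + 1) * al + 2 * (t' + 1) = (t' + 1) * (4 * P) by rewrite -al2 [X in _ = X]mulnDr [2 * _]mulnC.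
  have M4 : m * al + 2 * m = m * (4 * P) by rewrite -al2 [X in _ = X]mulnDr [2 * _]mulnC.
  split.
  - case: hm => [mq|[mq r0]]; subst m.
    + case: (ltnP q t') => qt.
      * have := T6' qt; lia.
      * have qe : q = t' by lia.
        rewrite qe in tauE M2 M4 *; lia.
    + have := T7 r0; have := Tr r0.
      move: hc; rewrite gtn_eqF //= => hc.
      have : q * P + 2 * P <= t' * P by rewrite -mulnDl; apply: leq_mul => //; lia.
      lia.
  - case: T5 => [S0|S1].
    + have [qe re] := T8 S0.
      case: hm => [mq|[mq r0]]; last by lia.
      subst m; rewrite qe in tauE T3 M1 M2 M3 M4 *; rewrite re in T2 T3 tauE; lia.
    + lia.
set n := fun i => q + (i < r).
have hmi : forall i, n i = q \/ (n i = q + 1 /\ 0 < r).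
  move=> i; rewrite /n; case: (ltnP i r) => ir; [right; split => //; lia | left; lia].
have e0 : 0 < e by [].
have al0 : 0 < al by rewrite /al; lia.
have hD : 2 * e + al = 4 * P by rewrite /al /e; lia.
have hbe : be = 4 * P - e by [].
have nt : forall i, i < st -> n i < t' + 2.
  by move=> i _; case: (hmi i) => [->|[-> r0]]; [lia | have := hq3 r0; lia].
have tauE2 : tau + (t' + 2) = 2 * ((t' + 2) * (2 * K)).
  rewrite /tau subnK //; have : t' + 2 <= (t' + 2) * (2 * K) by apply: leq_pmulr; lia.
  lia.
have hT : ((t' + 2) * e + tau) * st = (su + sv) * (4 * P).
  rewrite /e muln1 addnC tauE2 PE /K; ring.
have hA : st * tau = sv * be + su * al.
  have F : st * (2 * ((t' + 2) * (2 * K))) = 4 * (K * P) by rewrite PE; ring.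
  have G : st * (t' + 2) = P by [].
  have H : st * tau + st * (t' + 2) = st * (2 * ((t' + 2) * (2 * K))) by rewrite -mulnDr tauE2.
  have E1 : sv * be = sv * (4 * P) - sv * 1 by rewrite /be mulnBr.
  have E2 : su * al = su * (4 * P) - su * 2 by rewrite /al mulnBr.
  rewrite E1 E2.
  have I1 : sv * 1 <= sv * (4 * P) by apply: leq_mul; lia.
  have I2 : su * 2 <= su * (4 * P) by apply: leq_mul; lia.
  have KP : K * P = su * P + sv * P by rewrite /K mulnDl.
  have hP : P = su * 2 + sv by rewrite -G hk.
  rewrite G F in H.
  clear -H KP I1 I2 hP. lia.
have hR : forall i, i < st -> n i * be < tau.
  by move=> i _; have [h _] := C12 _ (hmi i); clear -h al0; lia.
have hRT : forall i, i < st -> tau - n i * be <= (t' + 2 - n i - 1) * al.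
  move=> i ip; have [_ h] := C12 _ (hmi i); have := nt i ip.
  rewrite (_ : t' + 2 - n i - 1 = t' + 1 - n i); last by lia.
  by rewrite leq_subLR.
have hRB : forall i, i < st -> (al <= tau - n i * be) \/
    exists g, Acum (fun l => tau - n l * be) i <= g * al <= Acum (fun l => tau - n l * be) i.+1.
  by move=> i _; left; have [h _] := C12 _ (hmi i); clear -h; lia.
exact: (v1_assemble st0 e0 al0 hD hbe nt hn hk hT hA hR hRT hRB).
Qed.


Lemma exists_natsol t v st su sv : 2 <= t -> 1 <= v -> (v = 1 -> sv <= (t - 2) * st) ->
  0 < st -> 0 < su -> su * v.+1 + sv * v = st * t ->
  exists D TT UU VV, natsol t v st su sv D TT UU VV.
Proof.
move=> t2 v1 hv st0 su0 hN.
case: (ltnP 1 v) => v2.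
- case: (boolP [&& v == 2, t == 2 & 0 < sv]) => hc.
  + case/and3P: hc => /eqP ve /eqP te sv0; subst v t.
    by apply: caseB => //; rewrite -hN.
  + apply: caseA => //.
    move: hc; rewrite !negb_and -!leqNgt.
    case: (eqVneq v 2) => [ve|vn] /=; last by move=> _; apply/orP; left; apply/orP; right; lia.
    case: (eqVneq t 2) => [te|tn] /=; last by move=> _; apply/orP; right; lia.
    by rewrite leqn0 => ->.
- have ve : v = 1 by lia.
  subst v; have hv' := hv erefl.
  have hk : st * t = su * 2 + sv by rewrite -hN muln1.
  case: (boolP ((sv %% st == 0) || (sv %/ st + 4 <= t))) => hc.
  + by exists (4 * (st * t)); apply: caseC.
  + exists (4 * st).
    move: hc; rewrite negb_or -lt0n -ltnNge => /andP [r0 hq].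
    have hsv : sv = sv %/ st * st + sv %% st := divn_eq sv st.
    suff h : sv %/ st + 3 = t by apply: (caseD _ st0 hk h r0); rewrite -h leq_addl.
    move: (sv %/ st) (sv %% st) hsv r0 hq => q r hsv r0 hq.
    have : q * st < (t - 2) * st by lia.
    rewrite ltn_mul2r => /andP [_ h]; lia.
Qed.

Import Order.TTheory GRing.Theory Num.Theory.
Local Open Scope ring_scope.

Section RealPart.
Variable R : realType.

Lemma mx_entries_lists (m n : nat) (G : nat -> seq nat) (phi : nat -> R) :
  (forall i, (i < m)%N -> size (G i) = n) ->
  mx_entries (\matrix_(i < m, j < n) phi (nth 0%N (G i) j)) =
  map phi (flatten [seq G i | i <- iota 0 m]).
Proof.
move=> hs; rewrite /mx_entries.
have E1 : forall (T : Type) (F : nat -> T) k,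
    [seq F (nat_of_ord j) | j <- enum 'I_k] = [seq F j | j <- iota 0 k].
  by move=> T F k; rewrite -val_enum_ord -map_comp.
have -> : [seq (\matrix_(i < m, j < n) phi (nth 0%N (G i) j)) i j | i <- enum 'I_m, j <- enum 'I_n] =
    flatten [seq [seq phi (nth 0%N (G i) j) | j <- iota 0 n] | i <- iota 0 m].
  rewrite -(E1 _ (fun i => [seq phi (nth 0%N (G i) j) | j <- iota 0 n]) m).
  congr flatten; apply: eq_map => i; rewrite -(E1 _ (fun j => phi (nth 0%N (G i) j)) n).
  by apply: eq_map => j; rewrite mxE.
rewrite map_flatten -map_comp; congr flatten; apply/eq_in_map => i.
rewrite mem_iota add0n => /andP [_ im] /=.
rewrite -(hs i im).
have -> : [seq phi (nth 0%N (G i) j) | j <- iota 0 (size (G i))] =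
          map phi [seq nth 0%N (G i) j | j <- iota 0 (size (G i))] by rewrite -map_comp.
by rewrite map_nth_iota0 // take_size.
Qed.

Lemma sum_nth_list (n : nat) (s : seq nat) (phi : nat -> R) :
  size s = n -> \sum_(j < n) phi (nth 0%N s j) = \sum_(x <- s) phi x.
Proof.
move=> <-; rewrite (big_nth 0%N) big_mkord //.
Qed.

Lemma sum_phi (s : seq nat) (d g Dr : R) :
  \sum_(x <- s) (d + g * x%:R / Dr) = (size s)%:R * d + g * (sumn s)%:R / Dr.
Proof.
elim: s => [|a s IH]; rewrite ?big_nil ?big_cons /=; first by rewrite mul0r mulr0 mul0r addr0.
by rewrite IH natrD -addn1 natrD; ring.
Qed.

Lemma list_min (s : seq R) : s != [::] -> exists2 y, y \in s & forall x, x \in s -> y <= x.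
Proof.
elim: s => // a s IH _; case: (eqVneq s [::]) => [-> | sn].
  by exists a; rewrite ?mem_head // => x; rewrite inE => /eqP ->.
have [y ys ymin] := IH sn.
case: (leP a y) => ay.
  exists a; first exact: mem_head.
  by move=> x; rewrite inE => /orP [/eqP -> //| /ymin]; apply: le_trans.
exists y; first by rewrite inE ys orbT.
by move=> x; rewrite inE => /orP [/eqP -> | /ymin //]; apply: ltW.
Qed.

End RealPart.




Theorem lemma14 (R : realType) (t u v st su sv : nat) (xt xu xv : rat) :
  is_3MDAP t u v st su sv xt xu xv ->
  u = (v + 1)%N ->
  (ratr (xu - xv) : R) < f_dap R t u v st su sv xt xu xv.
Proof.
move=> [t2 [u2 [v1 [hv1 [st0 [su0 [hN [hX hlt]]]]]]]] hu.
have hN' : (su * v.+1 + sv * v = st * t)%N by rewrite -addn1 -hu.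
have hv1' : v = 1%N -> (sv <= (t - 2) * st)%N by move=> h; move: (hv1 h); rewrite h mul1n.
have [D [TT [UU [VV [D0 hT hU hV hP]]]]] := exists_natsol t2 v1 hv1' st0 su0 hN'.
set XT : R := ratr xt; set XU : R := ratr xu; set XV : R := ratr xv.
have hXr : su%:R * XU + sv%:R * XV = st%:R * XT.
  by have := congr1 (@ratr R) hX; rewrite rmorphD !rmorphM /= !ratr_nat.
have hltr : XU / u%:R < XV / v%:R.
  by rewrite -(ratr_nat R u) -(ratr_nat R v) /XU /XV -!fmorph_div ltr_rat.
rewrite rmorphB /= -/XU -/XV.
set d := XU - XV.
set g := (v.+1)%:R * XV - v%:R * XU.
have v0 : (0 < v%:R :> R) by rewrite ltr0n.
have g0 : 0 < g.
  move: hltr; rewrite hu addn1 ltr_pdivrMr ?ltr0n // mulrAC ltr_pdivlMr //.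
  rewrite /g subr_gt0 mulrC [X in _ < X]mulrC //.
set Dr : R := D%:R.
have Dr0 : 0 < Dr by rewrite ltr0n.
set phi := fun x : nat => d + g * x%:R / Dr.
set T := \matrix_(i < st, j < t) phi (nth 0%N (TT i) j).
set U := \matrix_(i < su, j < u) phi (nth 0%N (UU i) j).
set V := \matrix_(i < sv, j < v) phi (nth 0%N (VV i) j).
have key : forall i, (i < st)%N -> \sum_(j < t) phi (nth 0%N (TT i) j) = XT.
  move=> i ip; have [s1 s2 _] := hT i ip.
  rewrite sum_nth_list // /phi sum_phi s1.
  have st0r : (0 < st%:R :> R) by rewrite ltr0n.
  apply: (mulfI (lt0r_neq0 st0r)).
  rewrite -hXr mulrDr.
  have -> : st%:R * (g * (sumn (TT i))%:R / Dr) = g * (su + sv)%:R.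
    have hS : (sumn (TT i))%:R = (su + sv)%:R * Dr / st%:R :> R.
      rewrite -natrM -s2 natrM mulfK //; exact: lt0r_neq0.
    rewrite hS; field; rewrite ?lt0r_neq0 //.
  have hNr : su%:R * (v.+1)%:R + sv%:R * v%:R = st%:R * t%:R :> R by rewrite -!natrM -natrD hN'.
  rewrite mulrA -hNr /g /d natrD; ring.
have keyU : forall i, (i < su)%N -> \sum_(j < u) phi (nth 0%N (UU i) j) = XU.
  move=> i ip; have [s1 s2] := hU i ip.
  rewrite sum_nth_list; last by rewrite s1 hu addn1.
  rewrite /phi sum_phi s1 s2 mulfK ?lt0r_neq0 // /g /d; ring.
have keyV : forall i, (i < sv)%N -> \sum_(j < v) phi (nth 0%N (VV i) j) = XV.
  move=> i ip; have [s1 s2] := hV i ip.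
  rewrite sum_nth_list //.
  rewrite /phi sum_phi s1 s2 mulfK ?lt0r_neq0 // /g /d; ring.
have eT : mx_entries T = map phi (flatten [seq TT i | i <- iota 0 st]).
  by apply: mx_entries_lists => i ip; have [] := hT i ip.
have eU : mx_entries U = map phi (flatten [seq UU i | i <- iota 0 su]).
  by apply: mx_entries_lists => i ip; have [s1 _] := hU i ip; rewrite s1 hu addn1.
have eV : mx_entries V = map phi (flatten [seq VV i | i <- iota 0 sv]).
  by apply: mx_entries_lists => i ip; have [s1 _] := hV i ip.
have feas : feasible xt xu xv T U V.
  split.
  - move=> i; under eq_bigr => j _ do rewrite mxE; exact: key.
  - move=> i; under eq_bigr => j _ do rewrite mxE; exact: keyU.
  - move=> i; under eq_bigr => j _ do rewrite mxE; exact: keyV.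
  - by rewrite eT eU eV -map_cat; apply: perm_map.
have Tpos : forall i j, d < T i j.
  move=> i j; rewrite mxE /phi ltrDl.
  have [s1 _ s3] := hT i (ltn_ord i).
  have : (0 < nth 0%N (TT i) j)%N.
    by move/allP: s3; apply; apply: mem_nth; rewrite s1.
  rewrite -(ltr0n R) => x0.
  by apply: divr_gt0 => //; apply: mulr_gt0.
have ne : mx_entries T != [::].
  rewrite -size_eq0 /mx_entries size_allpairs !size_enum_ord -lt0n muln_gt0 st0 /=.
  by apply: leq_trans t2.
have [y ymem ymin] := list_min ne.
have yS : min_entry_values R t u v st su sv xt xu xv y.
  exists T, U, V; split => //; split.
  - move: ymem; rewrite /mx_entries => /allpairsP [[i j] [_ _ ->]]; by exists i, j.
  - move=> i j; apply: ymin; rewrite /mx_entries; apply/allpairsP; exists (i, j).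
    by rewrite !mem_enum.
have dy : d < y.
  move: ymem; rewrite /mx_entries => /allpairsP [[i j] [_ _ ->]]; exact: Tpos.
apply: (lt_le_trans dy).
apply: ub_le_sup => //.
exists (XT / t%:R) => z [T' [U' [V' [[fT _ _ _] [_ zmin]]]]].
have t0 : (0 < t%:R :> R) by rewrite ltr0n; apply: leq_trans t2.
rewrite ler_pdivlMr //.
have := fT (Ordinal st0); rewrite /XT => <-.
have -> : z * t%:R = \sum_(j < t) z by rewrite sumr_const card_ord mulr_natr.
by apply: ler_sum => j _; apply: zmin.
Qed.
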